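(* Let $w_0\ge w_1\ge\cdots\ge w_{n-1}$ be positive real numbers with sum $W$. Then $$\sum_{i=0}^{n-1} w_i\Bigl(\tfrac12+\lfloor \log_2(i+1)\rfloor\Bigr)\ \ge\ \sum_{i=0}^{n-1}\tfrac12\, w_i\log_2(W/w_i).$$ *)

(* Defs.v *)
From Stdlib Require Import Reals Lra Lia.
Open Scope R_scope.

Definition log2R (x : R) : R := ln x / ln 2.

Fixpoint sumR (n : nat) (f : nat -> R) : R :=
  match n with
  | O => 0
  | S m => sumR m f + f m
  end.

(* Main.v *)
Require Import Defs.
From Stdlib Require Import Reals Lra Lia.
Open Scope R_scope.

Definition qq (i : nat) : R := / (2 * 4 ^ Nat.log2 (i + 1)).

Lemma ln_le_m1 x : 0 < x -> ln x <= x - 1.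
Proof. intros Hx. pose proof (exp_ineq1_le (ln x)). rewrite exp_ln in H; lra. Qed.

Lemma pow2_pos k : 0 < 2 ^ k.
Proof. apply pow_lt; lra. Qed.

Lemma four_pow k : 4 ^ k = 2 ^ k * 2 ^ k.
Proof. rewrite <- Rpow_mult_distr. f_equal; lra. Qed.

Lemma qq_inv (n : nat) :
  let t := 2 ^ Nat.log2 (n + 1) in
  sumR n qq <= 1 - / t + (INR (n + 1) - t) / (2 * (t * t)).
Proof.
  induction n as [|n IH]; simpl.
  - rewrite Rmult_1_r. replace (0+1)%nat with 1%nat by lia. simpl. lra.
  - unfold qq. rewrite four_pow.
    replace (n + 1)%nat with (S n) in * by lia.
    replace (S n + 1)%nat with (S (S n)) by lia.
    set (k := Nat.log2 (S n)) in *.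
    pose proof (pow2_pos k) as Ht.
    destruct (Nat.log2_succ_or (S n)) as [E|E].
    + assert (Hb := proj1 (Nat.log2_eq_succ_iff_pow2 (S n) ltac:(lia)) E).
      destruct Hb as [b Hb].
      assert (b = S k) as Hbk.
      { pose proof (Nat.log2_pow2 b ltac:(lia)) as HH. rewrite <- Hb, E in HH. unfold k. lia. }
      rewrite E. fold k. cbv zeta in IH.
      assert (INR (S n) = 2 * 2 ^ k - 1).
      { apply (f_equal INR) in Hb. rewrite S_INR, pow_INR, Hbk in Hb. replace (INR 2) with 2 in Hb by (simpl; lra). rewrite <- tech_pow_Rmult in Hb. lra. }
      rewrite H in IH |- *. simpl pow.
      eapply Rle_trans. apply Rplus_le_compat_r. exact IH.
      right. field. lra.
    + rewrite E. fold k. idtac.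
      eapply Rle_trans. apply Rplus_le_compat_r. exact IH.
      right. field. lra.
Qed.

Lemma qq_le1 n : sumR n qq <= 1.
Proof.
  pose proof (qq_inv n) as H. simpl in H.
  pose proof (Nat.log2_spec (n+1) ltac:(lia)) as [_ H2].
  apply (lt_INR) in H2. rewrite pow_INR in H2. rewrite <- tech_pow_Rmult in H2. replace (INR 2) with 2 in H2 by (simpl; lra).
  set (t := 2 ^ Nat.log2 (n + 1)) in *.
  assert (0 < t) by apply pow2_pos.
  eapply Rle_trans. exact H.
  assert ((INR (n + 1) - t) / (2 * (t * t)) <= / t).
  { apply (Rmult_le_reg_r (2 * (t*t))). nra.
    unfold Rdiv. rewrite Rmult_assoc, Rinv_l by nra.
    replace (/ t * (2 * (t * t))) with (2 * t) by (field; lra). nra. }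
  lra.
Qed.

Lemma term_bound (W w : R) (i : nat) : 0 < W -> 0 < w ->
  1/2 * w * log2R (W / w) <= w * (1/2 + INR (Nat.log2 (i + 1))) + (qq i * W - w) / (2 * ln 2).
Proof.
  intros HW Hw. unfold log2R, qq.
  set (k := Nat.log2 (i+1)).
  assert (Hl2 : / 2 < ln 2) by exact ln_lt_2.
  assert (H4 : 0 < 4 ^ k) by (apply pow_lt; lra).
  assert (Hq : 0 < / (2 * 4 ^ k)) by (apply Rinv_0_lt_compat; lra).
  assert (E : ln (W / w) = ln (W * / (2 * 4 ^ k) / w) + ln 2 * (1 + 2 * INR k)).
  { unfold Rdiv. rewrite !ln_mult, ln_Rinv, ln_Rinv, ln_mult, ln_pow by
      (try apply Rinv_0_lt_compat; try apply Rmult_lt_0_compat; lra).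
    replace 4 with (2*2) by lra. rewrite ln_mult by lra. ring. }
  pose proof (ln_le_m1 (W * / (2 * 4 ^ k) / w)) as L.
  assert (0 < W * / (2 * 4 ^ k) / w).
  { unfold Rdiv. apply Rmult_lt_0_compat. apply Rmult_lt_0_compat; lra. apply Rinv_0_lt_compat; lra. }
  specialize (L H). rewrite E.
  set (a := ln (W * / (2 * 4 ^ k) / w)) in *.
  set (x := W * / (2 * 4 ^ k) / w) in *.
  assert (Hx : / (2 * 4 ^ k) * W = x * w) by (unfold x; field; lra).
  rewrite Hx.
  assert (1/2 * w * ((a + ln 2 * (1 + 2 * INR k)) / ln 2) =
          w * (1/2 + INR k) + w * a / (2 * ln 2)) by (field; lra).
  rewrite H0.
  apply Rplus_le_compat_l.
  unfold Rdiv. apply Rmult_le_compat_r.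
  apply Rlt_le, Rinv_0_lt_compat; lra. nra.
Qed.

Lemma sumR_pos n w : (forall i, (i < n)%nat -> 0 < w i) -> (0 < n)%nat -> 0 < sumR n w.
Proof.
  induction n; intros H Hn; simpl. lia.
  destruct n. simpl. specialize (H 0%nat). assert (0 < w 0%nat) by (apply H; lia). lra.
  assert (0 < sumR (S n) w) by (apply IHn; [intros; apply H; lia| lia]).
  assert (0 < w (S n)) by (apply H; lia). lra.
Qed.

Theorem lemma6 (n : nat) (w : nat -> R)
  (hpos : forall i, (i < n)%nat -> 0 < w i)
  (hmon : forall i j, (i <= j < n)%nat -> w j <= w i) :
  let W := sumR n w in
  sumR n (fun i => w i * (1/2 + INR (Nat.log2 (i + 1))))
  >= sumR n (fun i => 1/2 * w i * log2R (W / w i)).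
Proof.
  intros W.
  destruct n as [|n']. simpl. lra.
  assert (HW : 0 < W) by (apply sumR_pos; auto; lia).
  assert (Hl2 : / 2 < ln 2) by exact ln_lt_2.
  assert (G : forall m, (m <= S n')%nat ->
    sumR m (fun i => 1/2 * w i * log2R (W / w i)) <=
    sumR m (fun i => w i * (1/2 + INR (Nat.log2 (i + 1)))) + (W * sumR m qq - sumR m w) / (2 * ln 2)).
  { induction m; intros Hm; simpl.
    - unfold Rdiv. rewrite Rmult_0_r, Rminus_0_r, Rmult_0_l. lra.
    - pose proof (IHm ltac:(lia)).
      pose proof (term_bound W (w m) m HW (hpos m ltac:(lia))).
      assert (Heq : (W * (sumR m qq + qq m) - (sumR m w + w m)) / (2 * ln 2)
        = (W * sumR m qq - sumR m w) / (2 * ln 2) + (qq m * W - w m) / (2 * ln 2)) by (field; lra).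
      rewrite Heq. lra. }
  specialize (G (S n') (le_n _)).
  pose proof (qq_le1 (S n')).
  fold W in G.
  assert ((W * sumR (S n') qq - W) / (2 * ln 2) <= 0).
  { unfold Rdiv. assert (0 < /(2*ln 2)) by (apply Rinv_0_lt_compat; lra). assert (W * sumR (S n') qq - W <= 0) by nra. nra. }
  lra.
Qed.
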